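(* Let $k\ge 0$ be an integer and $d=2\cdot 2^{2k}$. Let $r$ be an odd positive integer with $r\ge\lceil\sqrt d\,\rceil$, and put $n=2^k r$ and $$a=2n+d=2\cdot2^k r+2\cdot 2^{2k},\qquad b=2n+\frac{2n^2}{d}=2\cdot 2^k r+r^2,\qquad c=b+d=2\cdot2^kr+r^2+2\cdot2^{2k}.$$ Then $(a,b,c)$ is an IDPT. Moreover, every IDPT $(a,b,c)$ with $c-b=2\cdot 2^{2k}$ arises in this way from some such $r$.
   Context: A Diophantine Pythagorean Triangle (DPT) is a triple $(a,b,c)$ of positive integers with $a<b<c$ and $a^2+b^2=c^2$. An IDPT is a DPT with $\gcd(a,b,c)=1$. $\lceil x\rceil$ is the smallest integer $\ge x$. *)

(* Defs.v *)
From mathcomp Require Import all_boot.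
Set Implicit Arguments. Unset Strict Implicit. Unset Printing Implicit Defensive.

Definition DPT (a b c : nat) : Prop :=
  [/\ 0 < a, a < b, b < c & a ^ 2 + b ^ 2 = c ^ 2].

Definition IDPT (a b c : nat) : Prop :=
  DPT a b c /\ gcdn (gcdn a b) c = 1.

Definition ceil_sqrt (d : nat) : nat :=
  find (fun m => d <= m ^ 2) (iota 0 d.+1).

(* Main.v *)
Require Import Defs.
From mathcomp Require Import all_boot.
From mathcomp Require Import zify.

Lemma ceil_sqrt_spec d : d <= ceil_sqrt d ^ 2.
Proof.
rewrite /ceil_sqrt.
set P := (fun m => d <= m ^ 2).
have hs : has P (iota 0 d.+1).
  apply/hasP; exists d; first by rewrite mem_iota /=; lia.
  rewrite /P; nia.
have := nth_find 0 hs; rewrite nth_iota; first by rewrite add0n.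
by rewrite -[X in _ < X](size_iota 0 d.+1) -has_find.
Qed.

Lemma ceil_sqrt_min d r : d <= r ^ 2 -> ceil_sqrt d <= r.
Proof.
move=> h; rewrite leqNgt; apply/negP => hlt.
have := before_find 0 hlt.
have hsz : r < d.+1.
  have := find_size (fun m => d <= m ^ 2) (iota 0 d.+1).
  rewrite size_iota /ceil_sqrt in hlt *; lia.
by rewrite nth_iota // add0n h.
Qed.

Theorem theorem2 (k : nat) :
  let d := 2 * 2 ^ (2 * k) in
  (forall r : nat, odd r -> 0 < r -> ceil_sqrt d <= r ->
     let n := 2 ^ k * r in
     IDPT (2 * n + d) (2 * 2 ^ k * r + r ^ 2) (2 * 2 ^ k * r + r ^ 2 + d))
  /\
  (forall a b c : nat, IDPT a b c -> c - b = d ->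
     exists r : nat, [/\ odd r, 0 < r & ceil_sqrt d <= r] /\
       [/\ a = 2 * (2 ^ k * r) + d,
            b = 2 * 2 ^ k * r + r ^ 2 &
            c = 2 * 2 ^ k * r + r ^ 2 + d]).
Proof.
move=> d.
have hd : d = 2 ^ (2 * k).+1 by rewrite expnS.
have ht : 2 ^ (2 * k) = (2 ^ k) ^ 2 by rewrite mulnC expnM.
have tpos : 0 < 2 ^ k by rewrite expn_gt0.
set t := 2 ^ k in ht tpos *.
have hd2 : d = 2 * t ^ 2 by rewrite /d ht.
split.
- move=> r ro rpos hr n.
  have hdr : d <= r ^ 2 by apply: leq_trans (ceil_sqrt_spec d) _; rewrite leq_exp2r.
  have hne : d != r ^ 2.
    apply/eqP => e; have : odd (r ^ 2) by rewrite oddX ro orbT.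
    by rewrite -e hd2 oddM.
  split; [split|].
  + rewrite /n; nia.
  + rewrite /n; move: hne; rewrite hd2 => /eqP hne; nia.
  + rewrite hd2; nia.
  + rewrite /n hd2; nia.
  + set g := gcdn (gcdn _ _) _.
    have gb : g %| 2 * t * r + r ^ 2 by rewrite /g -gcdnA; apply: dvdn_trans (dvdn_gcdr _ _) (dvdn_gcdl _ _).
    have gc : g %| 2 * t * r + r ^ 2 + d by apply: dvdn_gcdr.
    have gd : g %| d by rewrite -(dvdn_addr _ gb).
    have bo : odd (2 * t * r + r ^ 2) by rewrite oddD oddX ro orbT -mulnA oddM.
    have cg : coprime g d.
      rewrite hd; apply: coprimeXr; rewrite coprimen2.
      apply: contraLR bo; rewrite -!dvdn2 => ge; exact: dvdn_trans ge gb.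
    by move: cg; rewrite /coprime (gcdn_idPl gd) => /eqP.
- move=> a b c [[a0 ab bc e] g1] cb.
  have hc : c = b + d by lia.
  have ha2 : a ^ 2 = (2 * t) ^ 2 * (b + t ^ 2).
    rewrite hc hd2 in e; nia.
  have : 2 * t %| a by rewrite -(@dvdn_pexp2r _ _ 2) // ha2 dvdn_mulr.
  case/dvdnP => s hs.
  have hs2 : s ^ 2 = b + t ^ 2.
    apply/eqP; rewrite -(@eqn_pmul2l ((2 * t) ^ 2)); last by rewrite expn_gt0 muln_gt0 tpos.
    apply/eqP; rewrite -ha2 hs; nia.
  have ts : t < s by rewrite -(@ltn_exp2r _ _ 2) // hs2; lia.
  have bodd : odd b.
    apply/negPn/negP => be.
    have : 2 %| gcdn (gcdn a b) c.
      rewrite !dvdn_gcd hs hc hd2 -!dvdn2 in be *.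
      rewrite be andbT dvdn_mull ?dvdn_mulr //= dvdn_addr // dvdn_mulr //.
    by rewrite g1.
  have [r hr] : exists r, s = r + t by exists (s - t); lia.
  subst s.
  exists r.
  have hb : b = 2 * t * r + r ^ 2.
    apply/eqP; rewrite -(eqn_add2r (t ^ 2)) -hs2; apply/eqP.
    rewrite !expnS !expn0; lia.
  split; [split|].
  + by move: bodd; rewrite hb oddD -mulnA oddM /= oddX /= => ->.
  + lia.
  + apply: ceil_sqrt_min; rewrite hd2; move: ab; rewrite hs hb !expnS !expn0; lia.
  + split; [rewrite hs hd2 !expnS !expn0; lia | exact hb | rewrite hc hb //].
Qed.
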